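(* Let $q$ be a prime power and $b,k,t$ positive integers with $t\ge\lceil\frac{9+b}{2}\rceil$ and $b\le k\le(2t-b+1)^2$. Then \[ r_b^{wt_b}(k,t)\le\frac{q(2t-b)}{q\left(1-\sqrt{\frac{\ln(2t-b+1)}{2t-b+1}}\right)-1}. \]
   Context: For $\boldsymbol{z}=(z_0,\ldots,z_{n-1}),\boldsymbol{w}\in\mathbb{F}_q^n$, $d_b(\boldsymbol{z},\boldsymbol{w})$ is the number of $i\in\{0,\ldots,n-1\}$ with $(z_i,\ldots,z_{i+b-1})\ne(w_i,\ldots,w_{i+b-1})$ (indices mod $n$), and $wt_b(\boldsymbol{x})=d_b(\boldsymbol{x},\boldsymbol{0})$ is the $b$-symbol weight function on $\mathbb{F}_q^k$. A systematic encoding $\mathrm{Enc}(\boldsymbol{x})=(\boldsymbol{x},p(\boldsymbol{x}))\in\mathbb{F}_q^{k+r}$ is a function-correcting $b$-symbol code for $f$ if $d_b(\mathrm{Enc}(\boldsymbol{x}_1),\mathrm{Enc}(\boldsymbol{x}_2))\ge 2t+1$ whenever $f(\boldsymbol{x}_1)\ne f(\boldsymbol{x}_2)$; $r_b^f(k,t)$ is the smallest $r$ for which one exists. *)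

(* Defs.v *)
From HB Require Import structures.
From mathcomp Require Import all_boot all_order all_algebra all_field.
From mathcomp Require Import reals exp.
Set Implicit Arguments. Unset Strict Implicit. Unset Printing Implicit Defensive.
Import Order.TTheory GRing.Theory Num.Theory.
Local Open Scope ring_scope.

Definition dist_b (F : finFieldType) (n b : nat) (z w : n.-tuple F) : nat :=
  #|[set i : 'I_n | [exists j : 'I_b,
      nth 0 z ((i + j) %% n)%N != nth 0 w ((i + j) %% n)%N]]|.

Definition wt_b (F : finFieldType) (k b : nat) (x : k.-tuple F) : nat :=
  dist_b b x [tuple of nseq k 0].

Definition sys_enc (F : finFieldType) (k r : nat)
  (p : k.-tuple F -> r.-tuple F) (x : k.-tuple F) : (k + r).-tuple F :=
  cat_tuple x (p x).

Definition is_FCbSC (F : finFieldType) (T : eqType) (k r b t : nat)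
  (f : k.-tuple F -> T) (p : k.-tuple F -> r.-tuple F) : Prop :=
  forall x1 x2 : k.-tuple F, f x1 != f x2 ->
    (2 * t + 1 <= dist_b b (sys_enc p x1) (sys_enc p x2))%N.

Definition FCbSC_exists (F : finFieldType) (T : eqType) (k b t : nat)
  (f : k.-tuple F -> T) (r : nat) : Prop :=
  exists p : k.-tuple F -> r.-tuple F, @is_FCbSC F T k r b t f p.

(* Main.v *)
Require Import Defs.
From HB Require Import structures.
From mathcomp Require Import all_boot all_order all_algebra all_field.
From mathcomp Require Import reals exp.
Import Order.TTheory GRing.Theory Num.Theory.
Local Open Scope ring_scope.

From mathcomp Require Import ring lra zify.
From mathcomp Require Import classical_sets boolp topology normedtype derive realfun sequences.
Import Order.TTheory GRing.Theory Num.Theory.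
Import numFieldNormedType.Exports.
Local Open Scope ring_scope.

Section HS.
Variable R : realType.

Lemma mono_deriv (f df : R -> R) (a b : R) : a <= b ->
  (forall x, is_derive x (1:R) f (df x)) ->
  (forall x, a <= x <= b -> 0 <= df x) -> f a <= f b.
Proof.
move=> ab fd dpos.
rewrite -subr_ge0.
have [|c cab ->] := MVT_segment ab (fun x _ => fd x).
  apply/continuous_subspaceT=> x.
  exact/differentiable_continuous/derivable1_diffP/(@ex_derive _ _ _ _ _ _ _ (fd x)).
apply: mulr_ge0; last by rewrite subr_ge0.
by apply: dpos; rewrite in_itv /= in cab.
Qed.

Variable p : R.
Hypothesis p0 : 0 <= p.
Hypothesis p1 : p <= 1.

Definition Dp (x : R) : R := 1 - p + p * expR x.

Lemma Dp_gt0 x : 0 < Dp x.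
Proof.
rewrite /Dp; have [->|pn0] := eqVneq p 0; first by rewrite subr0 mul0r addr0.
have pp : 0 < p by rewrite lt_def pn0 p0.
by rewrite ltr_wpDl // ?subr_ge0 // mulr_gt0 // expR_gt0.
Qed.

Lemma Dp_derive x : is_derive x (1:R) Dp (p * expR x).
Proof.
rewrite /Dp.
have h1 : is_derive x (1:R) (fun y : R => p * expR y) (p * expR x).
  exact: (@is_deriveZ R R^o R^o expR p x 1 (expR x) (is_derive_expR x)).
have h2 := @is_deriveD R R^o R^o _ (fun y : R => p * expR y) x 1 0 (p * expR x) (@is_derive_cst R R^o R^o (1-p) x 1) h1.
by rewrite add0r in h2.
Qed.

Definition psi (x : R) := (1 - p) * (Dp x)^-1 + 4^-1 * x.

Lemma psi_derive x : is_derive x (1:R) psi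
   ((1 - p) * (- (Dp x) ^- 2 * (p * expR x)) + 4^-1).
Proof.
have h1 := @is_deriveV R Dp x _ 1 (lt0r_neq0 (Dp_gt0 x)) (Dp_derive x).
have h2 := @is_deriveZ R R^o R^o _ (1 - p) x 1 _ h1.
have h3 := @is_deriveZ R R^o R^o id (4^-1) x 1 1 (@is_derive_id R R^o x 1).
have h4 := @is_deriveD R R^o R^o _ _ x 1 _ _ h2 h3.
apply: (is_derive_eq h4).
by rewrite -[LHS]/((1 - p) * (- Dp x ^- 2 * (p * expR x)) + 4^-1 * 1) mulr1.
Qed.

Lemma D1 c : 0 <= c -> p * expR c / Dp c <= p + c / 4.
Proof.
move=> c0.
have := @mono_deriv psi _ 0 c c0 psi_derive.
have -> : psi 0 = 1 - p by rewrite /psi /Dp expR0 mulr1 subrK invr1 mulr1 mulr0 addr0.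
move=> H.
have {H}H : 1 - p <= psi c.
  apply: H => x _.
  have Dx := Dp_gt0 x.
  have key : (1-p) * (p*expR x) <= (Dp x)^+2 / 4.
    have := sqr_ge0 (1 - p - p * expR x); rewrite /Dp => h; nra.
  have -> : (1 - p) * (- Dp x ^- 2 * (p * expR x)) = - ((1-p)*(p*expR x) / (Dp x)^+2).
    by field; exact: lt0r_neq0.
  rewrite addrC subr_ge0 ler_pdivrMr ?exprn_gt0 //.
  move: key; rewrite ler_pdivlMr //; nra.
rewrite /psi in H.
have Dc := Dp_gt0 c.
have E : p * expR c / Dp c = 1 - (1 - p) / Dp c.
  move: (lt0r_neq0 Dc); rewrite /Dp => Dn; by field.
rewrite E; lra.
Qed.


Definition gH (x : R) := p * x + 8^-1 * (x * x) - ln (Dp x).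

Lemma gH_derive x : is_derive x (1:R) gH (p + 4^-1 * x - (p * expR x) / Dp x).
Proof.
have hid := @is_derive_id R R^o x 1.
have h1 := @is_deriveZ R R^o R^o id p x 1 1 hid.
have h2 := @is_deriveM R R^o id id x 1 1 1 hid hid.
have h3 := @is_deriveZ R R^o R^o _ (8^-1) x 1 _ h2.
have h4 := @is_derive1_comp R (@ln R) Dp x _ _ (is_derive1_ln (Dp_gt0 x)) (Dp_derive x).
have h5 := @is_deriveD R R^o R^o _ _ x 1 _ _ h1 h3.
have h6 := @is_deriveB R R^o R^o _ _ x 1 _ _ h5 h4.
apply: (is_derive_eq h6).
rewrite -[LHS]/(p * 1 + 8^-1 * (x * 1 + x * 1) - (Dp x)^-1 * (p * expR x)).
have := lt0r_neq0 (Dp_gt0 x); move: (Dp x) => d dn; by field.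
Qed.

Lemma hoeffding l : 0 <= l -> Dp l <= expR (p * l + l ^+ 2 / 8).
Proof.
move=> l0.
have := @mono_deriv gH _ 0 l l0 gH_derive.
have -> : gH 0 = 0 by rewrite /gH /Dp expR0 mulr1 subrK ln1 !(mulr0, mul0r) !addr0 subrr.
move=> H.
have {H}H : 0 <= gH l.
  apply: H => x /andP[x0 _].
  have := @D1 x x0; lra.
rewrite -[X in X <= _]lnK ?posrE ?Dp_gt0 // ler_expR.
rewrite /gH in H; rewrite expr2; lra.
Qed.

End HS.

Section NS.
Variable R : realType.

Lemma expR2_lt10 : expR (2:R) < 10.
Proof.
have h : (4/5 : R) <= expR (- (1/5)) by have := @expR_ge1Dx R (- (1/5)); lra.
have h2 : ((4/5 : R) ^+ 10) <= expR (- 2).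
  have -> : (- 2 : R) = 10%:R * (- (1/5)) by rewrite -mulrN; field.
  rewrite expRM_natl; apply: lerXn2r => //; rewrite ?nnegrE //; lra.
have h3 : (1/10 : R) < (4/5) ^+ 10.
  rewrite !exprS expr0; lra.
have : (1/10 : R) < expR (-2) by apply: (lt_le_trans h3 h2).
rewrite expRN => h4.
have e0 := @expR_gt0 R 2.
rewrite -[X in _ < X]div1r ltr_pdivlMr // in h4.
lra.
Qed.


Lemma ln10_lt : ln (10:R) < 5/2.
Proof.
have h : (9/8 : R) <= expR (1/8) by have := @expR_ge1Dx R (1/8); lra.
have h2 : ((9/8 : R) ^+ 20) <= expR (5/2).
  have -> : (5/2 : R) = 20%:R * (1/8) by field.
  rewrite expRM_natl; apply: lerXn2r => //; rewrite ?nnegrE //; lra.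
have h3 : (10 : R) < (9/8) ^+ 20 by rewrite !exprS expr0; lra.
rewrite -ltr_expR lnK ?posrE //; exact: (lt_le_trans h3 h2).
Qed.

Lemma ln_ge2 (x : R) : 10 <= x -> 2 <= ln x.
Proof.
move=> x10.
rewrite -ler_expR lnK ?posrE; last lra.
have := expR2_lt10; lra.
Qed.

Lemma ln_lt_quarter (x : R) : 10 <= x -> ln x < x / 4.
Proof.
move=> x10.
have -> : x = 10 * (1 + (x/10 - 1)) by field.
rewrite lnM ?posrE; [|lra|lra].
have := @le_ln1Dx R (x/10 - 1) ltac:(lra).
have := ln10_lt; lra.
Qed.

End NS.

Section CS.
Variable R : realType.

Lemma core_ineq (Q N L s B r : R) : 2 <= Q -> 10 <= N -> 2 <= L -> 0 < s -> s < 1/2 ->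
  s ^+ 2 * N = L -> B * (Q * (1 - s) - 1) = Q * (N - 1) ->
  r <= B -> B < r + 1 ->
  [/\ N < B, 0 < (r - N + 1) - r / Q & r * L < ((r - N + 1) - r / Q) ^+ 2].
Proof.
move=> Q2 N10 L2 s0 s12 sN BE rB Br.
have den0 : 0 < Q * (1 - s) - 1 by nra.
have B0 : 0 < B.
  have : 0 < B * (Q * (1 - s) - 1) by rewrite BE; nra.
  by rewrite pmulr_lgt0.
have h1 : B * (1 - s) > N - 1.
  have : B * (1 - s) * Q = Q * (N - 1) + B by rewrite -BE; ring.
  nra.
have h2 : s * (B - N) > 2.
  have : (s * (B - N) - 2) * (1 - s) > 0 by nra.
  nra.
have BN : N < B by nra.
have Qp : 0 < Q by lra.
have key : B * (1 - Q^-1) - (N - 1) = B * s.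
  have : B * (1 - Q^-1) - (N - 1) - B * s = (B * (Q * (1 - s) - 1) - Q * (N - 1)) / Q.
    by field; exact: lt0r_neq0.
  rewrite BE subrr mul0r; lra.
set p := Q^-1 in key *.
have p0 : 0 < p by rewrite invr_gt0.
have p1 : p <= 1/2.
  have hQ : Q * p = 1 by rewrite /p; field; lra.
  nra.
rewrite -/p.
set e := B - r.
have e0 : 0 <= e by rewrite /e; lra.
have e1 : e < 1 by rewrite /e; lra.
have DdE : r - N + 1 - r * p = B * s - e * (1 - p).
  rewrite /e; lra.
rewrite DdE.
have Bs2 : B * s > 2 by nra.
have ep : e * (1 - p) <= 1 by nra.
have ep0 : 0 <= e * (1 - p) by nra.
split => //; first by lra.
have rE : r = B - e by rewrite /e; ring.
rewrite rE -sN.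
have h3 : 0 < B * s * (s * (B - N) - 2) by nra.
have h4 : e * (1 - p) * (B * s) <= B * s by nra.
have h5 : 0 <= e * (s ^+ 2 * N) by apply: mulr_ge0 => //; nra.
nra.
Qed.

End CS.

Definition hdf {F : finType} {r} (g h : {ffun 'I_r -> F}) := #|[set i | g i != h i]|.

Definition agree {F : finType} {r} (g h : {ffun 'I_r -> F}) := #|[set i | g i == h i]|.

Lemma agree_hdf (F : finType) r (g h : {ffun 'I_r -> F}) : (agree g h + hdf g h = r)%N.
Proof.
rewrite /agree /hdf -[X in _ = X]card_ord -(cardsC [set i | g i == h i]); congr (_ + _)%N.
by apply: eq_card => i; rewrite !inE.
Qed.

Section KS.
Variable R : realType.

Lemma sum_agree (F : finType) r (h : {ffun 'I_r -> F}) (z : R) :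
  \sum_(g : {ffun 'I_r -> F}) z ^+ agree g h = (z + (#|F| - 1)%:R) ^+ r.
Proof.
have E1 g : z ^+ agree g h = \prod_(i < r) (if g i == h i then z else 1).
  by rewrite -big_mkcond /= prodr_const /agree; congr (_ ^+ _); apply: eq_card => i; rewrite inE.
rewrite (eq_bigr _ (fun g _ => E1 g)).
rewrite -(bigA_distr_bigA (fun (i : 'I_r) (y : F) => if y == h i then z else 1)).
rewrite -[X in _ = _ ^+ X]card_ord -prodr_const; apply: eq_bigr => i _.
rewrite (bigD1 (h i)) //= eqxx; congr (_ + _).
rewrite (eq_bigr (fun _ => 1)); last by move=> y /negbTE ->.
rewrite sumr_const; congr (_ *+ _).
by rewrite subn1 -(cardC1 (h i)); apply: eq_card => y; rewrite !inE.
Qed.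

Lemma ball_card (F : finType) r (h : {ffun 'I_r -> F}) (a : nat) (z : R) : 1 <= z ->
  #|[set g : {ffun 'I_r -> F} | (a <= agree g h)%N]|%:R * z ^+ a <= (z + (#|F| - 1)%:R) ^+ r.
Proof.
move=> z1.
rewrite -(@sum_agree F r h z) mulr_natl -sumr_const big_mkcond /=.
apply: ler_sum => g _.
case: ifP => [|_]; last by apply: exprn_ge0; lra.
by rewrite inE => ag; exact: ler_weXn2l.
Qed.

End KS.

Section NatPart.
Local Open Scope nat_scope.
Lemma hdfC (F : finType) r (g h : {ffun 'I_r -> F}) : hdf g h = hdf h g.
Proof. by apply: eq_card => i; rewrite !inE eq_sym. Qed.

Lemma card_bigcup_le (T : finType) m (B : 'I_m -> {set T}) :
  #|\bigcup_(i < m) B i| <= \sum_(i < m) #|B i|.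
Proof.
elim: m B => [|m IH] B; first by rewrite !big_ord0 cards0.
rewrite !big_ord_recr /=.
apply: leq_trans (leq_card_setU _ _) _.
by rewrite leq_add2r.
Qed.

Lemma greedy (F : finType) r n k (h0 : {ffun 'I_r -> F}) : 0 < k ->
  (forall h : {ffun 'I_r -> F}, k * #|[set g | hdf g h < n]| < #|F| ^ r) ->
  exists c : nat -> {ffun 'I_r -> F},
    forall i j, i <= k -> j <= k -> i != j -> n <= hdf (c i) (c j).
Proof.
move=> k0 Hb.
suff : forall m, m <= k.+1 -> exists c : nat -> {ffun 'I_r -> F},
    forall i j, i < m -> j < m -> i != j -> n <= hdf (c i) (c j).
  by case/(_ k.+1 (leqnn _)) => c Hc; exists c => i j ik jk; apply: Hc.
elim=> [_|m IH mk]; first by exists (fun _ => h0).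
have [c Hc] := IH (ltnW mk).
set Bad := \bigcup_(i < m) [set g | hdf g (c i) < n].
have cardB : #|Bad| < #|F| ^ r.
  apply: (leq_ltn_trans (@card_bigcup_le _ m (fun i : 'I_m => [set g | hdf g (c i) < n]))).
  have Qp : 0 < #|F| ^ r := leq_ltn_trans (leq0n _) (Hb h0).
  rewrite -(ltn_pmul2l k0) big_distrr /=.
  have H1 : \sum_(i < m) k * #|[set g | hdf g (c i) < n]| <= \sum_(i < m) (#|F| ^ r - 1).
    by apply: leq_sum => i _; have := Hb (c i); lia.
  apply: (leq_ltn_trans H1).
  rewrite sum_nat_const card_ord.
  move: (#|F| ^ r) Qp => Q Qp; nia.
have [g gB] : exists g, g \notin Bad.
  case: (pickP (fun g => g \notin Bad)) => [g gB|H]; first by exists g.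
  have : #|Bad| = #|{ffun 'I_r -> F}|.
    by apply: eq_card => g; have := H g; rewrite /= => /negbFE ->.
  by rewrite card_ffun card_ord => E; rewrite E ltnn in cardB.
exists (fun i => if i == m then g else c i) => i j im jm ij.
have gfar l : l < m -> n <= hdf g (c l).
  move=> lm; move: gB; apply: contraR; rewrite -ltnNge => gl.
  by apply/bigcupP; exists (Ordinal lm) => //; rewrite inE.
have [Ei|im'] := eqVneq i m; have [Ej|jm'] := eqVneq j m.
- by move: ij; rewrite Ei Ej eqxx.
- apply: gfar; by rewrite ltn_neqAle jm' -ltnS.
- rewrite hdfC; apply: gfar; by rewrite ltn_neqAle im' -ltnS.
- by apply: Hc => //; rewrite ltn_neqAle ?im' ?jm' -ltnS.
Qed.

Lemma dist_b_ge (F : finFieldType) N b (z w : N.-tuple F) (D : {set 'I_N}) :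
  (0 < b)%N -> (forall i : 'I_N, i \in D -> nth 0%R z i != nth 0%R w i) -> (0 < #|D|)%N ->
  (minn N (#|D| + b - 1) <= dist_b b z w)%N.
Proof.
move=> b0 HD D0.
have [d0 d0D] : exists d0, d0 \in D by apply/set0Pn; rewrite -card_gt0.
have N0 : (0 < N)%N by case: d0 {d0D} => d0 /= /(leq_ltn_trans (leq0n _)).
rewrite /dist_b.
set W := [set i : 'I_N | _].
have [allW|] := boolP [forall i, i \in W].
  suff -> : #|W| = N by apply: geq_minl.
  rewrite -[RHS]card_ord; apply: eq_card => i; by move/forallP: allW => ->.
rewrite negb_forall => /existsP [i0 i0W].
pose pos (x : nat) : 'I_N := Ordinal (ltn_pmod x N0).
have i0nd j : (j < b)%N -> nth 0%R z ((i0 + j) %% N) = nth 0%R w ((i0 + j) %% N).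
  move=> jb; apply/eqP; apply: contraNT i0W => H.
  by rewrite inE; apply/existsP; exists (Ordinal jb).
have offE (d : 'I_N) : pos (i0 + (d + (N - i0 %% N)) %% N) = d.
  apply: val_inj => /=.
  rewrite modnDmr.
  have hi := divn_eq i0 N; have hs := ltn_pmod i0 N0.
  have -> : (i0 + (d + (N - i0 %% N)) = (i0 %/ N).+1 * N + d)%N.
    move: (i0 %/ N) (i0 %% N) hi hs => q s hi hs; rewrite mulSn; lia.
  by rewrite modnMDl modn_small.
have exo : exists o, (o < N)%N && (pos (i0 + o) \in D).
  exists ((d0 + (N - i0 %% N)) %% N); by rewrite ltn_pmod // offE d0D.
case: (ex_minnP exo) => os /andP [osN osD] osmin.
have bos : (b <= os)%N.
  rewrite leqNgt; apply/negP => osb.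
  by have := HD _ osD; rewrite /= i0nd // eqxx.
set E := [set pos (i0 + (os - 1 - val m)) | m : 'I_(b - 1)].
have cardE : #|E| = (b - 1)%N.
  rewrite card_imset ?card_ord // => m1 m2 /(congr1 val) /=.
  have ho1 : (os - 1 - m1 < N)%N by lia.
  have ho2 : (os - 1 - m2 < N)%N by lia.
  move/eqP; rewrite eqn_modDl !modn_small // => /eqP h.
  apply: val_inj => /=; have := ltn_ord m1; have := ltn_ord m2; lia.
have DE : [disjoint D & E].
  rewrite -setI_eq0; apply/eqP/setP => x; rewrite !inE.
  apply/negP => /andP [xD /imsetP [m _ xE]].
  have : (os <= os - 1 - m)%N.
    apply: osmin; rewrite xE in xD; rewrite xD andbT; lia.
  lia.
have sub : D :|: E \subset W.
  apply/fintype.subsetP => x; rewrite !inE => /orP [xD|/imsetP [m _ xE]].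
    apply/existsP; exists (Ordinal b0) => /=.
    by rewrite addn0 modn_small // HD.
  have mb : (m + 1 < b)%N by have := ltn_ord m; lia.
  apply/existsP; exists (Ordinal mb) => /=.
  rewrite xE /= modnDml.
  have -> : (i0 + (os - 1 - m) + (m + 1) = i0 + os)%N by have := ltn_ord m; lia.
  exact: (HD _ osD).
apply: leq_trans (subset_leq_card sub).
rewrite cardsU; move: DE; rewrite -setI_eq0 => /eqP ->.
rewrite cards0 subn0 cardE.
apply: leq_trans (geq_minr _ _) _; lia.
Qed.

End NatPart.

Lemma ball_iff (A H r n : nat) : (A + H = r)%N -> (n <= r)%N -> (H < n)%N = (r - n + 1 <= A)%N.
Proof. move=> E nr; apply/idP/idP; lia. Qed.

Lemma fin_ineq (b t k r D : nat) : (b + 9 <= 2 * t)%N -> (b <= k)%N -> (2 * t - b + 1 <= r)%N ->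
  ((2 * t - b + 1).+1 <= D)%N -> (2 * t + 1 <= minn (k + r) (D + b - 1))%N.
Proof. move=> h1 h2 h3 h4; rewrite leq_min; apply/andP; split; lia. Qed.

Theorem mainTheorem18 (R : realType) (F : finFieldType) (b k t : nat) :
  (0 < b)%N -> (0 < k)%N -> (0 < t)%N ->
  ((10 + b) %/ 2 <= t)%N ->
  (b <= k)%N -> (k <= (2 * t - b + 1) ^ 2)%N ->
  exists r : nat,
    @FCbSC_exists F nat k b t (@wt_b F k b) r /\
    (r%:R : R) <=
      (#|F|%:R * (2 * t - b)%N%:R) /
      (#|F|%:R * (1 - Num.sqrt (ln ((2 * t - b + 1)%N%:R) / (2 * t - b + 1)%N%:R)) - 1).
Proof.
move=> b0 k0 t0 tb bk kn.
have hb2t : (b + 9 <= 2 * t)%N by move: tb; lia.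
have EN1 : (2 * t - b)%N%:R = (2 * t - b + 1)%N%:R - 1 :> R by rewrite natrD addrK.
rewrite EN1.
set n := (2 * t - b + 1)%N in kn *.
have n10 : (10 <= n)%N by rewrite /n; lia.
have q2 : (1 < #|F|)%N := card_finNzRing_gt1 F.
set q := #|F| in q2 *.
set Q : R := q%:R.
set N : R := n%:R.
set L := ln N.
set s := Num.sqrt (L / N).
set B := Q * (N - 1) / (Q * (1 - s) - 1).
have Q2 : 2 <= Q by rewrite /Q (ler_nat R 2 q).
have N10 : 10 <= N by rewrite /N (ler_nat R 10 n).
have L2 : 2 <= L := @ln_ge2 R N N10.
have LN4 : L < N / 4 := @ln_lt_quarter R N N10.
have N0 : 0 < N by lra.
have LN0 : 0 <= L / N by apply: divr_ge0; lra.
have s2 : s ^+ 2 = L / N by rewrite /s sqr_sqrtr.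
have s0 : 0 < s by rewrite /s sqrtr_gt0 divr_gt0 //; lra.
have s12 : s < 1/2.
  have : s ^+ 2 < 1/4.
    rewrite s2 ltr_pdivrMr //; lra.
  nra.
have sN : s ^+ 2 * N = L by rewrite s2; field; lra.
have den0 : 0 < Q * (1 - s) - 1 by nra.
have BE : B * (Q * (1 - s) - 1) = Q * (N - 1) by rewrite /B; field; lra.
have B0 : 0 <= B by rewrite /B divr_ge0 //; nra.
set r := Num.truncn B.
have /andP [rB Br] := truncn_itv B0.
have Br' : B < r%:R + 1 by rewrite natr1.
have [NB Dd0 key] := @core_ineq R _ _ _ _ _ _ Q2 N10 L2 s0 s12 sN BE rB Br'.
have nr : (n <= r)%N.
  rewrite -ltnS -(ltr_nat R) -natr1; lra.
exists r; split; last exact: rB.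
have Qp : 0 < Q by lra.
have rpos : 0 < r%:R :> R by rewrite ltr0n; exact: leq_trans (leq_trans _ n10) nr.
set a := (r - n + 1)%N.
have aE : a%:R = r%:R - N + 1 :> R by rewrite /a natrD natrB.
set Dd := r%:R - N + 1 - r%:R / Q in Dd0 key.
set lam := 4 * Dd / r%:R.
have lam0 : 0 <= lam by rewrite /lam divr_ge0 //; lra.
set p := Q^-1.
have p0 : 0 <= p by rewrite /p invr_ge0; lra.
have hQp : Q * p = 1 by rewrite /p; field; lra.
have p1 : p <= 1 by nra.
have hoeff := @hoeffding R p p0 p1 lam lam0; rewrite /Dp in hoeff.
have z1 : 1 <= expR lam by rewrite -expR0 ler_expR.
have NE : N = expR L by rewrite /L lnK // posrE.
have kN : k%:R <= expR (2%:R * L) :> R.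
  rewrite expRM_natl -NE /N -natrX ler_nat; exact: kn.
have E0 : 2%:R * L + r%:R * (p * lam + lam ^+ 2 / 8) - a%:R * lam < 0.
  have -> : 2%:R * L + r%:R * (p * lam + lam ^+ 2 / 8) - a%:R * lam
           = 2 * (r%:R * L - Dd ^+ 2) / r%:R.
    rewrite aE /lam /Dd /p; field; by rewrite (lt0r_neq0 rpos) (lt0r_neq0 Qp).
  rewrite pmulr_llt0 ?invr_gt0 //; lra.
have Hball (h : {ffun 'I_r -> F}) : (k * #|[set g : {ffun 'I_r -> F} | (hdf g h < n)%N]| < q ^ r)%N.
  have ballE : [set g : {ffun 'I_r -> F} | (hdf g h < n)%N] = [set g | (a <= agree g h)%N].
    apply/setP => g; rewrite !inE; exact: ball_iff (agree_hdf _ _ g h) nr.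
  rewrite ballE -(ltr_nat R) natrM natrX -/Q.
  have bc := @ball_card R F r h a (expR lam) z1.
  move: bc; set V := (#|_|)%:R => bc.
  have V0 : 0 <= V by rewrite /V ler0n.
  have eq1 : expR lam + (q - 1)%:R = Q * (1 - p + p * expR lam).
    rewrite natrB ?(ltnW q2) // -/Q; rewrite mulrDr mulrBr mulr1 mulrA hQp mul1r; ring.
  rewrite eq1 exprMn -expRM_natl in bc.
  have D0 : 0 <= 1 - p + p * expR lam by rewrite addr_ge0 ?subr_ge0 // mulr_ge0 // expR_ge0.
  have bc2 : V * expR (a%:R * lam) <= Q ^+ r * expR (r%:R * (p * lam + lam ^+ 2 / 8)).
    apply: (le_trans bc); apply: ler_wpM2l; first by rewrite exprn_ge0 // ltW.
    rewrite expRM_natl; apply: lerXn2r => //; rewrite ?nnegrE ?expR_ge0 //.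
  have X0 := expR_gt0 (a%:R * lam).
  have Qr0 : 0 < Q ^+ r by rewrite exprn_gt0.
  have EE : expR (2%:R * L) * expR (r%:R * (p * lam + lam ^+ 2 / 8))
      = expR (2%:R * L + r%:R * (p * lam + lam ^+ 2 / 8) - a%:R * lam) * expR (a%:R * lam).
    by rewrite -!expRD; congr expR; ring.
  have E1 : expR (2%:R * L + r%:R * (p * lam + lam ^+ 2 / 8) - a%:R * lam) < 1 by rewrite expR_lt1.
  rewrite -(ltr_pM2r X0).
  have Z0 := expR_gt0 (2%:R * L).
  have Y0 := expR_gt0 (r%:R * (p * lam + lam ^+ 2 / 8)).
  move: EE E1 bc2 kN; set X := expR (a%:R * lam); set Y := expR (r%:R * _);
    set Z := expR (2%:R * L); set W := expR (_ - _); set QR := Q ^+ r.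
  move=> EE E1 bc2 kN.
  have h1 : k%:R * V * X <= Z * V * X.
    by apply: ler_wpM2r; [exact: ltW | apply: ler_wpM2r].
  have h2 : Z * V * X <= Z * (QR * Y) by rewrite -mulrA; apply: ler_wpM2l => //; exact: ltW.
  have h3 : Z * (QR * Y) = QR * (W * X) by rewrite mulrCA EE.
  have h4 : QR * (W * X) < QR * X by rewrite ltr_pM2l // -[X in _ < X]mul1r ltr_pM2r.
  by apply: (le_lt_trans h1); apply: (le_lt_trans h2); rewrite h3.
have [c Hc] := @greedy F r n k [ffun => 0] k0 Hball.
pose pf (x : k.-tuple F) : r.-tuple F := [tuple c (@wt_b F k b x) i | i < r].
exists pf => x1 x2 fx.
have wtk x : (@wt_b F k b x <= k)%N.
  by rewrite /wt_b /dist_b; apply: leq_trans (max_card _) _; rewrite card_ord.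
have x12 : x1 != x2 by apply: contraNneq fx => ->.
have [j0 hj0] : exists j0 : 'I_k, tnth x1 j0 != tnth x2 j0.
  have : [exists j0, tnth x1 j0 != tnth x2 j0].
    apply: contraR x12 => /existsPn H; apply/eqP/eq_from_tnth => i.
    by apply/eqP; have := H i; rewrite negbK.
  by case/existsP => j0 h; exists j0.
have Hcd := Hc _ _ (wtk x1) (wtk x2) fx.
set e1 := sys_enc pf x1.
set e2 := sys_enc pf x2.
set D := [set i : 'I_(k + r) | nth 0 e1 i != nth 0 e2 i].
have HD : forall i : 'I_(k + r), i \in D -> nth 0 e1 i != nth 0 e2 i by move=> i; rewrite inE.
set Dp := [set i : 'I_r | c (@wt_b F k b x1) i != c (@wt_b F k b x2) i].
have nthl (x : k.-tuple F) (j : 'I_k) : nth 0 (sys_enc pf x) (lshift r j) = tnth x j.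
  by rewrite /sys_enc /= nth_cat size_tuple ltn_ord (tnth_nth 0).
have nthr (x : k.-tuple F) (i : 'I_r) : nth 0 (sys_enc pf x) (rshift k i) = c (@wt_b F k b x) i.
  rewrite /sys_enc /= nth_cat size_tuple ltnNge leq_addr /= addKn.
  by rewrite -(tnth_nth 0 (pf x) i) tnth_mktuple.
have sub : lshift r j0 |: [set rshift k i | i in Dp] \subset D.
  apply/fintype.subsetP => x; rewrite !inE => /orP [/eqP ->|/imsetP [i iD ->]].
    by rewrite nthl nthl.
  by rewrite nthr nthr; rewrite inE in iD.
have cardD : (n.+1 <= #|D|)%N.
  apply: leq_trans (subset_leq_card sub).
  rewrite cardsU1 card_imset; last exact: rshift_inj.
  have -> : lshift r j0 \notin [set rshift k i | i in Dp].
    apply/imsetP => [[i _ /(congr1 val) /= E]]; have := ltn_ord j0; by rewrite E ltnNge leq_addr.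
  by rewrite add1n ltnS.
have D0 : (0 < #|D|)%N by apply: leq_trans cardD.
apply: leq_trans (@dist_b_ge F (k + r) b e1 e2 D b0 HD D0).
exact: fin_ineq hb2t bk nr cardD.
Qed.
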